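(* Under the standing setting and assumptions (A1)–(A3) described in the context, assume that the acceptance set $\mathcal A$ is polyhedral. Then the optimal payoff map $\mathcal R$ is lower semicontinuous at every $X\in\mathcal X$.
   Context: Let $\mathcal X$ be a Hausdorff, first countable, locally convex topological vector space over $\mathbb R$ with topological dual $\mathcal X'$, partially ordered by a partial order $\geq$ with positive cone $\mathcal X_+=\{X\in\mathcal X: X\geq 0\}$. Let $\mathcal M\subset\mathcal X$ be a vector subspace with $1<\dim\mathcal M<\infty$, carrying the relative topology, and let $\pi:\mathcal M\to\mathbb R$ be linear. Standing assumptions: (A1) there is $U\in\mathcal M\cap\mathcal X_+$ with $\pi(U)=1$; (A2) $\mathcal A\subsetneq\mathcal X$ is closed, contains $0$, and satisfies $\mathcal A+\mathcal X_+\subset\mathcal A$; (A3) the map $\rho:\mathcal X\to[-\infty,\infty]$, $\rho(X)=\inf\{\pi(Z): Z\in\mathcal M,\ X+Z\in\mathcal A\}$, is finitely valued and continuous. The optimal payoff map $\mathcal R:\mathcal X\rightrightarrows\mathcal M$ is $\mathcal R(X)=\{Z\in\mathcal M: X+Z\in\mathcal A,\ \pi(Z)=\rho(X)\}$. A set is polyhedral if it is a finite intersection of sets $\{X\in\mathcal X:\varphi(X)\geq\alpha\}$ with $\varphi\in\mathcal X'$, $\alpha\in\mathbb R$. $\mathcal R$ is lower semicontinuous at $X$ if for every open $\mathcal U\subset\mathcal M$ with $\mathcal R(X)\cap\mathcal U\neq\emptyset$ there is an open neighborhood $\mathcal U_X$ of $X$ in $\mathcal X$ such that $\mathcal R(Y)\cap\mathcal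 U\neq\emptyset$ for all $Y\in\mathcal U_X$. *)

(* Defs.v *)
From HB Require Import structures.
From mathcomp Require Import all_boot all_order all_algebra.
From mathcomp Require Import all_classical all_reals all_analysis.
Set Implicit Arguments. Unset Strict Implicit. Unset Printing Implicit Defensive.
Import Order.TTheory GRing.Theory Num.Theory numFieldNormedType.Exports.
Local Open Scope classical_set_scope.
Local Open Scope ring_scope.

Section Defs.
Context {R : realType} {E : tvsType R}.

Definition first_countable : Prop :=
  forall x : E, exists B : nat -> set E,
    (forall n, nbhs x (B n)) /\ (forall V, nbhs x V -> exists n, B n `<=` V).

Definition partial_order (ge : E -> E -> Prop) : Prop :=
  [/\ forall x, ge x x,
      forall x y, ge x y -> ge y x -> x = y &
      forall x y z, ge x y -> ge y z -> ge x z].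

Definition positive_cone (ge : E -> E -> Prop) : set E := [set x | ge x 0].

Definition dual_elt (phi : E -> R) : Prop :=
  (forall (a : R) (x y : E), phi (a *: x + y) = a * phi x + phi y) /\
  continuous phi.

Definition polyhedral (S : set E) : Prop :=
  exists (n : nat) (phi : 'I_n -> E -> R) (alpha : 'I_n -> R),
    (forall i, dual_elt (phi i)) /\
    S = [set x | forall i, alpha i <= phi i x].

Definition vector_subspace (M : set E) : Prop :=
  M 0 /\ forall (a : R) x y, M x -> M y -> M (a *: x + y).

Definition has_dim (M : set E) (n : nat) : Prop :=
  exists b : 'I_n -> E,
    [/\ forall i, M (b i),
        (forall c : 'I_n -> R, \sum_(i < n) c i *: b i = 0 -> forall i, c i = 0) &
        forall x, M x -> exists c : 'I_n -> R, x = \sum_(i < n) c i *: b i].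

(* linear map on the subspace M (values of pi outside M are irrelevant) *)
Definition linear_on (M : set E) (pi : E -> R) : Prop :=
  forall (a : R) x y, M x -> M y -> pi (a *: x + y) = a * pi x + pi y.

Definition rho (M : set E) (pi : E -> R) (A : set E) (X : E) : \bar R :=
  ereal_inf [set (pi Z)%:E | Z in [set Z | M Z /\ A (X + Z)]].

Definition optR (M : set E) (pi : E -> R) (A : set E) (X : E) : set E :=
  [set Z | [/\ M Z, A (X + Z) & (pi Z)%:E = rho M pi A X]].

(* lower semicontinuity at X; open subsets of M (relative topology) are M `&` O
   with O open in E *)
Definition lsc_at (M : set E) (F : E -> set E) (X : E) : Prop :=
  forall O : set E, open O ->
    F X `&` (M `&` O) !=set0 ->
    exists UX : set E, [/\ open UX, UX X &
      forall Y, UX Y -> F Y `&` (M `&` O) !=set0].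

End Defs.

(* Main.v *)
Require Import Defs.
From HB Require Import structures.
From mathcomp Require Import all_boot all_order all_algebra.
From mathcomp Require Import all_classical all_reals all_analysis.
From Stdlib Require List.
From mathcomp Require Import ring lra.
Set Implicit Arguments. Unset Strict Implicit. Unset Printing Implicit Defensive.
Import Order.TTheory GRing.Theory Num.Theory numFieldNormedType.Exports.
Local Open Scope classical_set_scope.
Local Open Scope ring_scope.
Section FM.
Variables (R : realType) (T : topologicalType).

Definition dot (n : nat) (a z : nat -> R) : R := \sum_(i < n) a i * z i.
Definition cstr := ((nat -> R) * (T -> R))%type.
Definition sat n (cs : seq cstr) (p : T) (z : nat -> R) :=
  forall c, List.In c cs -> c.2 p <= dot n c.1 z.

Lemma dotS n a z : dot n.+1 a z = dot n a z + a n * z n.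
Proof. by rewrite /dot big_ord_recr. Qed.

Lemma dot_ext n a z z' : (forall i, (i < n)%N -> z i = z' i) -> dot n a z = dot n a z'.
Proof. by move=> H; apply: eq_bigr => i _; rewrite H. Qed.

Lemma sat_ext n cs p z z' : (forall i, (i < n)%N -> z i = z' i) -> sat n cs p z -> sat n cs p z'.
Proof. by move=> H S c /S; rewrite (@dot_ext n c.1 z z' H). Qed.

Lemma dot_comb n x y a b z :
  dot n (fun i => x * a i + y * b i) z = x * dot n a z + y * dot n b z.
Proof.
rewrite /dot !mulr_sumr -big_split /=; apply: eq_bigr => i _; ring.
Qed.

Definition lowF n (c : cstr) p y := (c.2 p - dot n c.1 y) / c.1 n.

Definition comb n (l u : cstr) : cstr :=
  (fun i => (- u.1 n) * l.1 i + l.1 n * u.1 i,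
   fun p => (- u.1 n) * l.2 p + l.1 n * u.2 p).

Definition FM n (cs : seq cstr) : seq cstr :=
  List.filter (fun c : cstr => c.1 n == 0) cs ++
  List.map (fun lu : cstr * cstr => comb n lu.1 lu.2)
    (List.list_prod (List.filter (fun c : cstr => 0 < c.1 n) cs)
                    (List.filter (fun c : cstr => c.1 n < 0) cs)).

Lemma FM_sound n cs p z : sat n.+1 cs p z -> sat n (FM n cs) p z.
Proof.
move=> S c; rewrite List.in_app_iff => -[].
  move=> /List.filter_In [/S] + /eqP c0; by rewrite dotS c0 mul0r addr0.
move=> /List.in_map_iff [[l u] [<- /List.in_prod_iff [/List.filter_In [Sl lp] /List.filter_In [Su un]]]].
have := S _ Sl; have := S _ Su; rewrite !dotS /= dot_comb.
move: lp un; set L := l.1 n; set U := u.1 n; move=> lp un h1 h2.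
nra.
Qed.

Lemma low_up n cs p y l u : sat n (FM n cs) p y -> List.In l cs -> List.In u cs ->
  0 < l.1 n -> u.1 n < 0 -> lowF n l p y <= lowF n u p y.
Proof.
move=> S Il Iu lp un.
have: List.In (comb n l u) (FM n cs).
  apply/List.in_app_iff; right; apply/List.in_map_iff; exists (l, u); split => //.
  by apply/List.in_prod_iff; split; apply/List.filter_In; split.
move=> /S; rewrite /= dot_comb /lowF.
rewrite ler_ndivlMr // mulrAC ler_pdivlMr //.
move: lp un; set L := l.1 n; set U := u.1 n; move=> lp un h. nra.
Qed.

End FM.
Section Fold.
Variables (R : realType) (X : Type).
Implicit Types (P : X -> bool) (g : X -> R) (w B : R) (L : seq X).
Definition foldmax (P : X -> bool) (g : X -> R) w L :=
  foldr (fun c acc => if P c then Num.max (g c) acc else acc) w L.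
Definition foldmin (P : X -> bool) (g : X -> R) w L :=
  foldr (fun c acc => if P c then Num.min (g c) acc else acc) w L.

Lemma foldmax_init P g w L : w <= foldmax P g w L.
Proof. elim: L => //= c L IH; case: (P c); [by rewrite le_max IH orbT | exact: IH]. Qed.
Lemma foldmax_ge P g w L c : List.In c L -> P c -> g c <= foldmax P g w L.
Proof.
elim: L => //= d L IH [<- ->|/IH H]; first by rewrite le_max lexx.
by case: (P d) => // /H h; rewrite le_max h orbT.
Qed.
Lemma foldmax_lt P g w L B : w < B -> (forall c, List.In c L -> P c -> g c < B) ->
  foldmax P g w L < B.
Proof.
elim: L => //= d L IH wB H; case: ifP => Pd; last by apply: IH => // c Ic; apply: H; right.
rewrite gt_max H //=; [apply: IH => // c Ic; apply: H; right|left] => //.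
Qed.
Lemma foldmin_init P g w L : foldmin P g w L <= w.
Proof. elim: L => //= c L IH; case: (P c); [by rewrite ge_min IH orbT | exact: IH]. Qed.
Lemma foldmin_le P g w L c : List.In c L -> P c -> foldmin P g w L <= g c.
Proof.
elim: L => //= d L IH [<- ->|/IH H]; first by rewrite ge_min lexx.
by case: (P d) => // /H h; rewrite ge_min h orbT.
Qed.
Lemma foldmin_gt P g w L B : B < w -> (forall c, List.In c L -> P c -> B < g c) ->
  B < foldmin P g w L.
Proof.
elim: L => //= d L IH wB H; case: ifP => Pd; last by apply: IH => // c Ic; apply: H; right.
rewrite lt_min H //=; [apply: IH => // c Ic; apply: H; right|left] => //.
Qed.
Lemma foldmin_ge P g w L B : B <= w -> (forall c, List.In c L -> P c -> B <= g c) ->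
  B <= foldmin P g w L.
Proof.
elim: L => //= d L IH wB H; case: ifP => Pd; last by apply: IH => // c Ic; apply: H; right.
rewrite le_min H //=; [apply: IH => // c Ic; apply: H; right|left] => //.
Qed.
End Fold.

Section FM2.
Variables (R : realType) (T : topologicalType).
Implicit Types (cs : seq (cstr R T)).
Definition ext n (y : nat -> R) s := fun i => if i == n then s else y i.

Definition clamp n (cs : seq (cstr R T)) p y s0 :=
  foldmin (fun c : cstr R T => c.1 n < 0) (fun c => lowF n c p y)
    (foldmax (fun c : cstr R T => 0 < c.1 n) (fun c => lowF n c p y) s0 cs) cs.

Lemma dot_ext_n n a y s : dot n a (ext n y s) = dot n a y.
Proof. apply: dot_ext => i ilt; rewrite /ext; case: eqP => // ein; by rewrite ein ltnn in ilt. Qed.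

Lemma lift n cs p y s :
  (forall c, List.In c cs -> 0 < c.1 n -> lowF n c p y <= s) ->
  (forall c, List.In c cs -> c.1 n < 0 -> s <= lowF n c p y) ->
  sat n (FM n cs) p y -> sat n.+1 cs p (ext n y s).
Proof.
move=> Hl Hu S c Ic; rewrite dotS dot_ext_n /ext eqxx.
case: (ltgtP 0 (c.1 n)) => cn.
- have := Hl _ Ic cn; rewrite /lowF ler_pdivrMr //; lra.
- have := Hu _ Ic cn; rewrite /lowF ler_ndivlMr //; lra.
- have: List.In c (FM n cs) by apply/List.in_app_iff; left; apply/List.filter_In; rewrite -cn eqxx.
  by move=> /S; rewrite -cn mul0r addr0.
Qed.

Lemma clamp_sat n cs p y s0 : sat n (FM n cs) p y -> sat n.+1 cs p (ext n y (clamp n cs p y s0)).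
Proof.
move=> S; apply: lift => // c Ic cn.
  apply: foldmin_ge; first exact: (@foldmax_ge _ _ (fun c : cstr R T => 0 < c.1 n) (fun c => lowF n c p y)).
  by move=> u Iu un; apply: (low_up S).
exact: (@foldmin_le _ _ (fun c : cstr R T => c.1 n < 0) (fun c => lowF n c p y)).
Qed.

End FM2.
Section LSC.
Variables (R : realType) (T : topologicalType).
Implicit Types (cs : seq (cstr R T)).

Lemma combc (p0 : T) (f g : T -> R) x y : {for p0, continuous f} -> {for p0, continuous g} ->
  {for p0, continuous (fun p => x * f p + y * g p)}.
Proof. move=> hf hg. apply: cvgD. apply: cvgMl_tmp. exact hf. apply: cvgMl_tmp. exact hg. Qed.

Lemma dot_bound n a (w : nat -> R) d : (forall i, (i < n)%N -> `|w i| <= d) ->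
  `|dot n a w| <= (\sum_(i < n) `|a i|) * d.
Proof.
move=> H; rewrite /dot mulr_suml; apply: le_trans (ler_norm_sum _ _ _) _.
apply: ler_sum => i _; rewrite normrM; apply: ler_wpM2l => //; exact: H.
Qed.

Lemma glem n (a : nat -> R) (f : T -> R) p0 z0 e : {for p0, continuous f} -> 0 < e ->
  exists d, exists W, [/\ 0 < d, nbhs p0 W &
    forall p y, W p -> (forall i, (i < n)%N -> `|y i - z0 i| < d) ->
      `|(f p - dot n a y) - (f p0 - dot n a z0)| < e].
Proof.
move=> /cvgrPdist_lt hf e0.
set Sa := \sum_(i < n) `|a i|.
have Sa0 : 0 <= Sa by apply: sumr_ge0 => i _.
exists (e / 2 / (Sa + 1)), [set p | `|f p0 - f p| < e / 2]; split.
- by apply: divr_gt0; [apply: divr_gt0|]; lra.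
- by apply: hf; lra.
move=> p y /= hp hy.
have hd : `|dot n a y - dot n a z0| <= Sa * (e / 2 / (Sa + 1)).
  have -> : dot n a y - dot n a z0 = dot n a (fun i => y i - z0 i).
    by rewrite /dot -sumrB; apply: eq_bigr => i _; rewrite mulrBr.
  by apply: dot_bound => i /hy /ltW.
have hS : Sa * (e / 2 / (Sa + 1)) <= e / 2.
  rewrite mulrA ler_pdivrMr; last lra.
  have : 0 <= e / 2 by lra.
  nra.
have -> : f p - dot n a y - (f p0 - dot n a z0) = (f p - f p0) - (dot n a y - dot n a z0) by ring.
apply: le_lt_trans (ler_normB _ _) _.
rewrite distrC in hp; lra.
Qed.

Lemma fin_choice (X : Type) (p0 : T) (L : seq X) (P : X -> R -> set T -> Prop) :
  (forall c d d' W W', P c d W -> 0 < d' <= d -> W' `<=` W -> P c d' W') ->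
  (forall c, List.In c L -> exists d W, [/\ 0 < d, nbhs p0 W & P c d W]) ->
  exists d W, [/\ 0 < d, nbhs p0 W & forall c, List.In c L -> P c d W].
Proof.
move=> mono; elim: L => [|c L IH] H.
  by exists 1, setT; split => //; exact: filterT.
have [d [W [d0 nW HW]]] := IH (fun x Ix => H x (or_intror Ix)).
have [d1 [W1 [d10 nW1 HW1]]] := H c (or_introl erefl).
exists (Num.min d d1), (W `&` W1); split.
- by rewrite lt_min d0 d10.
- exact: filterI.
move=> x [<-|Ix].
  apply: mono HW1 _ _; first by rewrite lt_min d0 d10 /= ge_min lexx orbT.
  by move=> q [].
apply: mono (HW _ Ix) _ _; first by rewrite lt_min d0 d10 /= ge_min lexx.
by move=> q [].
Qed.

End LSC.
Section LSC2.
Variables (R : realType) (T : topologicalType).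
Implicit Types (cs : seq (cstr R T)).

Lemma FM_cont n cs p0 : (forall c, List.In c cs -> {for p0, continuous c.2}) ->
  forall c, List.In c (FM n cs) -> {for p0, continuous c.2}.
Proof.
move=> Hc c; rewrite List.in_app_iff => -[/List.filter_In [/Hc] //|].
move=> /List.in_map_iff [[l u] [<- /List.in_prod_iff [/List.filter_In [Il _] /List.filter_In [Iu _]]]].
exact: combc (Hc _ Il) (Hc _ Iu).
Qed.

Lemma fm_lsc n : forall cs p0 z0,
  (forall c, List.In c cs -> {for p0, continuous c.2}) ->
  sat n cs p0 z0 -> forall e, 0 < e ->
  exists W, nbhs p0 W /\ forall p, W p -> (exists z, sat n cs p z) ->
    exists z, sat n cs p z /\ forall i, (i < n)%N -> `|z i - z0 i| < e.
Proof.
elim: n => [|n IH] cs p0 z0 Hc S e e0.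
  exists setT; split; first exact: filterT.
  move=> p _ [z Sz]; exists z0; split => //.
  by apply: sat_ext Sz.
have [d [W2 [d0 nW2 H2]]] := @fin_choice R T _ p0 cs
  (fun c d W => c.1 n != 0 -> forall p y, W p -> (forall i, (i < n)%N -> `|y i - z0 i| < d) ->
      `|(c.2 p - dot n c.1 y) - (c.2 p0 - dot n c.1 z0)| < e * `|c.1 n|)
  ltac:(move=> c d d' W W' H /andP [d'0 d'd] WW' cn p y /WW' pW hy;
        apply: H => // i /hy h; exact: lt_le_trans h d'd)
  ltac:(move=> c Ic; have [cn|cn] := eqVneq (c.1 n) 0;
        [by exists 1, setT; split => //; try exact: filterT; rewrite cn eqxx|];
        have [d [W [d0 nW HW]]] := @glem R T n c.1 c.2 p0 z0 (e * `|c.1 n|) (Hc _ Ic)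
          ltac:(by rewrite mulr_gt0 // normr_gt0);
        by exists d, W; split => // _ p y pW hy; apply: HW).
have [W1 [nW1 H1]] := IH (FM n cs) p0 z0 (FM_cont Hc) (FM_sound S) (Num.min e d)
  ltac:(by rewrite lt_min e0 d0).
exists (W1 `&` W2); split; first exact: filterI.
move=> p [pW1 pW2] [z Sz].
have [y [Sy hy]] := H1 p pW1 (ex_intro _ z (FM_sound Sz)).
have hyd : forall i, (i < n)%N -> `|y i - z0 i| < d.
  by move=> i /hy; rewrite lt_min => /andP [].
have hye : forall i, (i < n)%N -> `|y i - z0 i| < e.
  by move=> i /hy; rewrite lt_min => /andP [].
exists (ext n y (clamp n cs p y (z0 n))); split; first exact: clamp_sat.
move=> i; rewrite ltnS leq_eqVlt => /orP [/eqP ->|ilt]; last first.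
  by rewrite /ext; case: eqP => [ein|_]; [rewrite ein ltnn in ilt|exact: hye].
rewrite /ext eqxx ltr_distl; apply/andP; split.
- apply: foldmin_gt.
    apply: lt_le_trans (foldmax_init _ _ _ _); lra.
  move=> c Ic /= cn.
  have := H2 c Ic (ltr0_neq0 cn) p y pW2 hyd.
  have := S c Ic; rewrite dotS /lowF ltr_ndivlMr // (ltr0_norm cn) ltr_norml => h /andP [h1 h2].
  nra.
- apply: le_lt_trans (foldmin_init _ _ _ _) _.
  apply: foldmax_lt; first lra.
  move=> c Ic /= cn.
  have := H2 c Ic (lt0r_neq0 cn) p y pW2 hyd.
  have := S c Ic; rewrite dotS /lowF ltr_pdivrMr // (gtr0_norm cn) ltr_norml => h /andP [h1 h2].
  nra.
Qed.

End LSC2.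
Section Proj.
Variables (R : realType) (T : topologicalType).
Implicit Types (cs : seq (cstr R T)).

Lemma fm_proj n : forall cs, exists cs1 : seq (cstr R T), forall p t,
  (exists z, z 0%N = t /\ sat n.+1 cs p z) <-> sat 1 cs1 p (fun _ => t).
Proof.
elim: n => [|n IH] cs.
  exists cs => p t; split.
    move=> [z [<- Sz]]; apply: sat_ext Sz => i; rewrite ltnS leqn0 => /eqP -> //.
  by move=> S; exists (fun _ => t).
have [cs1 H] := IH (FM n.+1 cs); exists cs1 => p t; rewrite -H; split.
  by move=> [z [z0 Sz]]; exists z; split => //; exact: FM_sound.
move=> [y [y0 Sy]]; exists (ext n.+1 y (clamp n.+1 cs p y 0)); split; first by rewrite /ext.
exact: clamp_sat.
Qed.

Lemma dot1 (a z : nat -> R) : dot 1 a z = a 0%N * z 0%N.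
Proof. by rewrite /dot big_ord1. Qed.

Lemma attain1 cs1 p (r : R) : (forall t, sat 1 cs1 p (fun _ => t) -> r <= t) ->
  (forall e, 0 < e -> exists t, sat 1 cs1 p (fun _ => t) /\ t < r + e) ->
  sat 1 cs1 p (fun _ => r).
Proof.
move=> Hlb Happ c Ic; rewrite dot1.
have [a0|a0] := leP (c.1 0%N) 0.
  have [t [St _]] := Happ 1 ltr01.
  have := St c Ic; have := Hlb t St; rewrite dot1; nra.
rewrite leNgt; apply/negP => hlt.
have e0 : 0 < (c.2 p - c.1 0%N * r) / c.1 0%N by apply: divr_gt0; lra.
have [t [St tlt]] := Happ _ e0.
have := St c Ic; rewrite dot1.
have : c.1 0%N * ((c.2 p - c.1 0%N * r) / c.1 0%N) = c.2 p - c.1 0%N * r.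
  by field; rewrite lt0r_neq0.
move: tlt; set e := (_ / _); nra.
Qed.
End Proj.
Section VecCont.
Variables (R : realType) (E : tvsType R).

Lemma vec_cont n : forall (b : 'I_n -> E) (w0 : 'I_n -> R) (O : set E),
  nbhs (\sum_(i < n) w0 i *: b i) O ->
  exists e, 0 < e /\ forall w : 'I_n -> R, (forall i, `|w i - w0 i| < e) ->
    O (\sum_(i < n) w i *: b i).
Proof.
elim: n => [|n IH] b w0 O hO.
  exists 1; split => // w _; rewrite big_ord0 in hO; rewrite big_ord0; exact: nbhs_singleton hO.
rewrite big_ord_recr /= in hO.
have := @add_continuous E (\sum_(i < n) w0 (widen_ord (leqnSn n) i) *: b (widen_ord (leqnSn n) i),
   w0 ord_max *: b ord_max) _ hO.
rewrite /nbhs /= => -[[U V] /= [hU hV] hUV].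
have [e1 [e10 H1]] := IH (fun i => b (widen_ord (leqnSn n) i)) (fun i => w0 (widen_ord (leqnSn n) i)) U hU.
have := @scale_continuous R E (w0 ord_max, b ord_max) _ hV.
rewrite /nbhs /= => -[[C D] /= [hC hD] hCD].
move: hC => /nbhs_ballP [e2 /= e20 hC].
exists (Num.min e1 e2); split; first by rewrite lt_min e10 e20.
move=> w hw; rewrite big_ord_recr /=.
apply: (hUV (_, _)); split => /=.
  apply: H1 => i; have := hw (widen_ord (leqnSn n) i); rewrite lt_min => /andP [] //.
apply: (hCD (_, _)); split => /=; last exact: nbhs_singleton hD.
apply: hC; rewrite /ball /= distrC; have := hw ord_max; rewrite lt_min => /andP [] //.
Qed.
End VecCont.
Section Glue.
Variables (R : realType) (E : tvsType R).
Variables (n m : nat) (b : 'I_n -> E) (phi : 'I_m -> E -> R) (alpha : 'I_m -> R)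
  (pi : E -> R) (M : set E) (rhoF : E -> R).
Hypothesis hphi : forall k, dual_elt (phi k).
Hypothesis hM : vector_subspace M.
Hypothesis hb : forall i, M (b i).
Hypothesis hpi : linear_on M pi.

Lemma lin0 (f : E -> R) : (forall a x y, f (a *: x + y) = a * f x + f y) -> f 0 = 0.
Proof. move=> H; have := H 1 0 0; rewrite scale1r addr0 mul1r; lra. Qed.

Lemma linD (f : E -> R) x y : (forall a x y, f (a *: x + y) = a * f x + f y) -> f (x + y) = f x + f y.
Proof. by move=> H; have := H 1 x y; rewrite scale1r mul1r. Qed.

Lemma lin_sum (f : E -> R) (w : 'I_n -> R) : (forall a x y, f (a *: x + y) = a * f x + f y) ->
  f (\sum_(i < n) w i *: b i) = \sum_(i < n) w i * f (b i).
Proof.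
move=> H; apply: (big_rec2 (fun x y => f y = x)); first exact: lin0.
by move=> i x y _ <-; rewrite H.
Qed.

Lemma pi_sum (w : 'I_n -> R) :
  M (\sum_(i < n) w i *: b i) /\ pi (\sum_(i < n) w i *: b i) = \sum_(i < n) w i * pi (b i).
Proof.
apply: (big_rec2 (fun x y => M y /\ pi y = x)).
  split; first exact: hM.1.
  have := hpi 1 hM.1 hM.1; rewrite scale1r addr0 mul1r; lra.
move=> i x y _ [My <-]; split; first exact: hM.2.
by rewrite hpi.
Qed.

Definition vecz (z : nat -> R) := \sum_(i < n) z i.+1 *: b i.

Definition ext0 (a0 : R) (f : 'I_n -> R) : nat -> R :=
  fun j => match j with 0 => a0 | j'.+1 => \sum_(i < n | (i : nat) == j') f i end.

Lemma pick (f : 'I_n -> R) (i : 'I_n) : \sum_(j < n | (j : nat) == i) f j = f i.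
Proof. by rewrite (big_pred1 i). Qed.

Lemma ext0S a0 f (i : 'I_n) : ext0 a0 f i.+1 = f i.
Proof. exact: pick. Qed.

Lemma dot_ext0 a0 f z : dot n.+1 (ext0 a0 f) z = a0 * z 0%N + \sum_(i < n) f i * z i.+1.
Proof.
rewrite /dot big_ord_recl /=; congr (_ + _); apply: eq_bigr => i _.
by rewrite /bump leq0n add1n add0n pick.
Qed.

Lemma vecz_ext0 t c : vecz (ext0 t c) = \sum_(i < n) c i *: b i.
Proof. by apply: eq_bigr => i _; rewrite ext0S. Qed.

Lemma Sphi k z : \sum_(i < n) phi k (b i) * z i.+1 = phi k (vecz z).
Proof. rewrite lin_sum; last exact: (hphi k).1. by apply: eq_bigr => i _; rewrite mulrC. Qed.

Lemma Spi z : \sum_(i < n) pi (b i) * z i.+1 = pi (vecz z).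
Proof. rewrite (pi_sum _).2; by apply: eq_bigr => i _; rewrite mulrC. Qed.

Lemma SpiN z : \sum_(i < n) - pi (b i) * z i.+1 = - pi (vecz z).
Proof. rewrite -Spi -sumrN; apply: eq_bigr => i _; by rewrite mulNr. Qed.

Definition ck k : cstr R E := (ext0 0 (fun i => phi k (b i)), fun Y => alpha k - phi k Y).
Definition o1 : cstr R E := (ext0 1 (fun i => - pi (b i)), fun _ => 0).
Definition o2 : cstr R E := (ext0 (-1) (fun i => pi (b i)), fun _ => 0).
Definition r1 : cstr R E := (ext0 1 (fun _ => 0), rhoF).
Definition r2 : cstr R E := (ext0 (-1) (fun _ => 0), fun Y => - rhoF Y).
Definition csB := o1 :: o2 :: List.map ck (enum 'I_m).
Definition csA := r1 :: r2 :: csB.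

Lemma In_mem (X : eqType) (x : X) (s : seq X) : x \in s -> List.In x s.
Proof. elim: s => //= y s IH; rewrite in_cons => /orP [/eqP ->|/IH]; [left|right]. by []. by []. Qed.

Lemma satB Y z : sat n.+1 csB Y z <->
  (z 0%N = pi (vecz z) /\ forall k, alpha k <= phi k (Y + vecz z)).
Proof.
split.
  move=> S; split.
    have := S o1 (or_introl erefl); have := S o2 (or_intror (or_introl erefl)).
    rewrite /= !dot_ext0 SpiN Spi; lra.
  move=> k; have := S (ck k) (or_intror (or_intror (List.in_map _ _ _ (In_mem (mem_enum _ k))))).
  rewrite /= dot_ext0 Sphi linD; last exact: (hphi k).1.
  lra.
move=> [h0 hk] c [<-|[<-|/List.in_map_iff [k [<- _]]]]; rewrite /= dot_ext0.
- rewrite SpiN; lra.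
- rewrite Spi; lra.
- rewrite Sphi; have := hk k; rewrite linD; last exact: (hphi k).1.
  lra.
Qed.

Lemma sum0 z : \sum_(i < n) (0:R) * z i.+1 = 0.
Proof. by apply: big1 => i _; rewrite mul0r. Qed.

Lemma satA Y z : sat n.+1 csA Y z <-> (z 0%N = rhoF Y /\ sat n.+1 csB Y z).
Proof.
split.
  move=> S; split; last by move=> c Ic; apply: S; right; right.
  have := S r1 (or_introl erefl); have := S r2 (or_intror (or_introl erefl)).
  rewrite /= !dot_ext0 !sum0; lra.
move=> [h0 S] c [<-|[<-|Ic]]; last exact: S.
- rewrite /= dot_ext0 sum0; lra.
- rewrite /= dot_ext0 sum0; lra.
Qed.

End Glue.
Unset Implicit Arguments.

Theorem mainTheorem1 (R : realType) (E : tvsType R)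
  (ge : E -> E -> Prop) (M : set E) (pi : E -> R) (A : set E) :
  hausdorff_space E ->
  first_countable (E := E) ->
  partial_order ge ->
  vector_subspace M ->
  (exists n : nat, (1 < n)%N /\ has_dim M n) ->
  linear_on M pi ->
  (* (A1) *)
  (exists U, [/\ M U, positive_cone ge U & pi U = 1]) ->
  (* (A2) *)
  closed A -> A 0 -> A <> setT ->
  (forall x p, A x -> positive_cone ge p -> A (x + p)) ->
  (* (A3) *)
  (forall X, rho M pi A X \is a fin_num) ->
  continuous (fun X => fine (rho M pi A X)) ->
  (* A polyhedral *)
  polyhedral A ->
  forall X : E, lsc_at M (optR M pi A) X.
Proof.
move=> _ _ _ hM [n [_ [b [hbM _ hspan]]]] hpi _ _ _ _ _ hfin hcont [m [phi [alpha [hphi hA]]]] X.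
have hAi : forall x, A x <-> forall k, alpha k <= phi k x by move=> x; rewrite hA.
set rhoF := fun Y => fine (rho M pi A Y).
have Feas : forall Y z, sat n.+1 (csB b phi alpha pi) Y z ->
    [/\ M (vecz b z), A (Y + vecz b z) & z 0%N = pi (vecz b z)].
  move=> Y z /(satB alpha hphi hM hbM hpi) [h0 hk]; split => //.
    exact: (pi_sum hM hbM hpi _).1.
  exact/hAi.
have HcA : forall Y c, List.In c (csA b phi alpha pi rhoF) -> {for Y, continuous c.2}.
  move=> Y c [<-|[<-|[<-|[<-|/List.in_map_iff [k [<- _]]]]]] /=.
  - exact: hcont.
  - by apply: cvgN; exact: hcont.
  - exact: cvg_cst.
  - exact: cvg_cst.
  - by apply: cvgB; [exact: cvg_cst|exact: (hphi k).2].
have Attain : forall Y, exists z, sat n.+1 (csA b phi alpha pi rhoF) Y z.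
  move=> Y.
  have [cs1 Hp] := fm_proj n (csB b phi alpha pi).
  have hrY : rho M pi A Y = (rhoF Y)%:E by rewrite fineK.
  have : sat 1 cs1 Y (fun _ => rhoF Y).
    apply: attain1.
      move=> t /Hp [z [<- /Feas [hZM hZA ->]]].
      rewrite -lee_fin -hrY; apply: ereal_inf_lbound; by exists (vecz b z).
    move=> e' e'0.
    have : (rho M pi A Y < (rhoF Y + e')%:E)%E by rewrite hrY lte_fin; lra.
    move=> /ereal_inf_lt [_ [Z [hZM hZA] <-] hlt].
    have [c hc] := hspan Z hZM.
    exists (pi Z); split; last by rewrite -lte_fin.
    apply/Hp; exists (ext0 (pi Z) c); split => //.
    apply/(satB alpha hphi hM hbM hpi); rewrite vecz_ext0 -hc; split => //; exact/hAi.
  move=> /Hp [z [hz0 Sz]]; exists z.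
  by apply/satA; split.
move=> O oO [Z0 [[hZ0M hZ0A hZ0pi] [_ hZ0O]]].
have [c0 hc0] := hspan Z0 hZ0M.
have hr0 : rhoF X = pi Z0 by rewrite /rhoF -hZ0pi.
have Sz0 : sat n.+1 (csA b phi alpha pi rhoF) X (ext0 (rhoF X) c0).
  apply/satA; split => //.
  apply/(satB alpha hphi hM hbM hpi); rewrite vecz_ext0 -hc0; split => //; exact/hAi.
have hO0 : nbhs (\sum_(i < n) c0 i *: b i) O by rewrite -hc0; apply: open_nbhs_nbhs; split.
have [e [e0 He]] := vec_cont hO0.
have [W [nW HW]] := fm_lsc (HcA X) Sz0 e0.
move: nW; rewrite nbhsE => -[B [oB BX] BW].
exists B; split => // Y BY.
have [z [Sz hz]] := HW Y (BW _ BY) (Attain Y).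
move/satA: (Sz) => [hz0 /Feas [hZM hZA hpiZ]].
exists (vecz b z); split; [split => // | split => //].
  by rewrite -hpiZ hz0 /rhoF fineK.
apply: He => i; have := hz i.+1 (ltn_ord i); by rewrite ext0S.
Qed.
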